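(* Let $\mathcal{H}$ be a real Hilbert space, let $A\colon \mathcal{H}\rightrightarrows\mathcal{H}$ be maximally monotone and let $B\colon \mathcal{H}\to\mathcal{H}$ be monotone and $L$-Lipschitz. Let $x\in(A+B)^{-1}(0)$, suppose $(\lambda_k)_{k\geq-1}\subseteq\left[\varepsilon,\frac{1-2\varepsilon}{2L}\right]$ for some $\varepsilon>0$, and let $(x_k)$ be given by $x_0,x_{-1}\in\mathcal{H}$ and $$x_{k+1} = J_{\lambda_k A}\bigl(x_k - \lambda_k B(x_k) - \lambda_{k-1}(B(x_k)-B(x_{k-1}))\bigr)\quad\forall k\in\mathbb{N}.$$ Then, for all $k\in\mathbb{N}$, $$\|x_{k+1}-x\|^2+2\lambda_k\langle B(x_{k+1})-B(x_k),x-x_{k+1}\rangle + \left(\tfrac{1}{2}+\varepsilon\right)\|x_{k+1}-x_k\|^2 \leq \|x_k-x\|^2 + 2\lambda_{k-1}\langle B(x_k)-B(x_{k-1}), x-x_{k}\rangle +\tfrac{1}{2}\|x_{k}-x_{k-1}\|^2.$$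
   Context: $J_{\lambda A}:=(I+\lambda A)^{-1}$ denotes the resolvent. *)

(* Defs.v *)
From mathcomp Require Import all_boot all_order all_algebra.
From mathcomp Require Import reals.
Set Implicit Arguments. Unset Strict Implicit. Unset Printing Implicit Defensive.
Import Order.TTheory GRing.Theory Num.Theory.
Local Open Scope ring_scope.

Definition hnorm (R : realType) (V : lmodType R) (ip : V -> V -> R) (x : V) : R :=
  Num.sqrt (ip x x).

Record is_hilbert (R : realType) (V : lmodType R) (ip : V -> V -> R) : Prop := {
  ip_sym : forall x y, ip x y = ip y x;
  ip_linl : forall (a : R) x y z, ip (a *: x + y) z = a * ip x z + ip y z;
  ip_ge0 : forall x, 0 <= ip x x;
  ip_eq0 : forall x, ip x x = 0 -> x = 0;
  ip_complete : forall u : nat -> V,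
    (forall e : R, 0 < e -> exists N, forall m n, (N <= m)%N -> (N <= n)%N ->
        hnorm ip (u m - u n) < e) ->
    exists l : V, forall e : R, 0 < e -> exists N, forall n, (N <= n)%N ->
        hnorm ip (u n - l) < e
}.

(* Set-valued operators A : V ⇉ V are given by their graphs: A x u  means u ∈ A(x). *)
Definition monotone_op (R : realType) (V : lmodType R) (ip : V -> V -> R)
  (A : V -> V -> Prop) : Prop :=
  forall x u y v, A x u -> A y v -> 0 <= ip (x - y) (u - v).

Definition max_monotone (R : realType) (V : lmodType R) (ip : V -> V -> R)
  (A : V -> V -> Prop) : Prop :=
  monotone_op ip A /\
  forall A' : V -> V -> Prop, monotone_op ip A' ->
    (forall x u, A x u -> A' x u) -> forall x u, A' x u -> A x u.

Definition monotone_fun (R : realType) (V : lmodType R) (ip : V -> V -> R)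
  (B : V -> V) : Prop := monotone_op ip (fun x u => u = B x).

Definition lipschitz_with (R : realType) (V : lmodType R) (ip : V -> V -> R)
  (L : R) (B : V -> V) : Prop :=
  forall x y, hnorm ip (B x - B y) <= L * hnorm ip (x - y).

(* z = J_{lam A}(y) = (I + lam A)^{-1}(y), i.e. y ∈ z + lam A(z). *)
Definition resolvent_rel (R : realType) (V : lmodType R)
  (A : V -> V -> Prop) (lam : R) (y z : V) : Prop :=
  exists a, A z a /\ y = z + lam *: a.

(* Main.v *)
Require Import Defs.
From mathcomp Require Import all_boot all_order all_algebra.
From mathcomp Require Import reals.
From mathcomp Require Import ring lra zify.
Import Order.TTheory GRing.Theory Num.Theory.
Local Open Scope ring_scope.
Set Implicit Arguments.

Section S.
Variables (R : realType) (V : lmodType R) (ip : V -> V -> R).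
Hypothesis H : is_hilbert ip.

Lemma ipDl x y z : ip (x + y) z = ip x z + ip y z.
Proof. by have := ip_linl H 1 x y z; rewrite scale1r mul1r. Qed.
Lemma ip0l z : ip 0 z = 0.
Proof. have := ipDl 0 0 z; rewrite addr0 => h; lra. Qed.
Lemma ipZl a x z : ip (a *: x) z = a * ip x z.
Proof. by have := ip_linl H a x 0 z; rewrite addr0 ip0l addr0. Qed.
Lemma ipNl x z : ip (- x) z = - ip x z.
Proof. by rewrite -scaleN1r ipZl mulN1r. Qed.
Lemma ipBl x y z : ip (x - y) z = ip x z - ip y z.
Proof. by rewrite ipDl ipNl. Qed.
Lemma ipDr x y z : ip z (x + y) = ip z x + ip z y.
Proof. by rewrite ip_sym // ipDl // !(ip_sym H z). Qed.
Lemma ipZr a x z : ip z (a *: x) = a * ip z x.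
Proof. by rewrite ip_sym // ipZl // !(ip_sym H z). Qed.
Lemma ipNr x z : ip z (- x) = - ip z x.
Proof. by rewrite ip_sym // ipNl // !(ip_sym H z). Qed.
Lemma ipBr x y z : ip z (x - y) = ip z x - ip z y.
Proof. by rewrite ipDr ipNr. Qed.

Lemma young (c L m : R) (u v d : V) : 0 < c -> 0 < L -> 2 * c * L <= m -> m <= 1 ->
  ip v v <= L ^+ 2 * ip d d -> - (2 * c * ip u v) <= m / 2 * ip u u + 2^-1 * ip d d.
Proof.
move=> c0 L0 hm m1 hv.
have := ip_ge0 H ((2 * c * L) *: u + L^-1 *: v).
rewrite !(ipDl, ipDr, ipZl, ipZr) (ip_sym H v u).
have uu := ip_ge0 H u.
have hL : L^-1 * L = 1 by rewrite mulVf // gt_eqF.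
have e1 : L^-1 * (L^-1 * ip v v) <= ip d d.
  have -> : L^-1 * (L^-1 * ip v v) = (L^-1)^+2 * ip v v by ring.
  apply: (le_trans (ler_wpM2l _ hv)); first by rewrite exprn_ge0 // invr_ge0 ltW.
  by rewrite mulrA -exprMn mulVf ?gt_eqF // expr1n mul1r.
have e2 : (2 * c * L) * ((2 * c * L) * ip u u) <= m * ip u u.
  rewrite mulrA; apply: ler_wpM2r => //.
  have h0 : 0 <= 2 * c * L by rewrite !mulr_ge0 // ltW.
  nra.
have e3 : (2 * c * L) * (L^-1 * ip u v) = 2 * c * ip u v.
  by field; rewrite gt_eqF.
have e4 : L^-1 * ((2 * c * L) * ip u v) = 2 * c * ip u v.
  by field; rewrite gt_eqF.
lra.
Qed.
End S.
Unset Implicit Arguments.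

Theorem lemma2p4 (R : realType) (V : lmodType R) (ip : V -> V -> R)
  (A : V -> V -> Prop) (B : V -> V) (L eps : R) (lam : int -> R)
  (x : int -> V) (xs : V) :
  is_hilbert ip ->
  max_monotone ip A ->
  monotone_fun ip B ->
  0 < L -> lipschitz_with ip L B ->
  A xs (- B xs) ->
  0 < eps ->
  (forall k : int, -1 <= k -> eps <= lam k <= (1 - 2 * eps) / (2 * L)) ->
  (forall k : nat, resolvent_rel A (lam k)
      (x k - lam k *: B (x k) - lam (k%:Z - 1) *: (B (x k) - B (x (k%:Z - 1))))
      (x (k%:Z + 1))) ->
  forall k : nat,
    ip (x (k%:Z + 1) - xs) (x (k%:Z + 1) - xs)
    + 2 * lam k * ip (B (x (k%:Z + 1)) - B (x k)) (xs - x (k%:Z + 1))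
    + (2^-1 + eps) * ip (x (k%:Z + 1) - x k) (x (k%:Z + 1) - x k)
    <= ip (x k - xs) (x k - xs)
       + 2 * lam (k%:Z - 1) * ip (B (x k) - B (x (k%:Z - 1))) (xs - x k)
       + 2^-1 * ip (x k - x (k%:Z - 1)) (x k - x (k%:Z - 1)).
Proof.
move=> Hh [hA _] hB L0 hL hAs e0 hlam hres k.
have [a [Aa hy]] := hres k.
have [l1 l2] : eps <= lam k /\ lam k <= (1 - 2 * eps) / (2 * L).
  by apply/andP; apply: hlam; lia.
have [c1 c2] : eps <= lam (k%:Z - 1) /\ lam (k%:Z - 1) <= (1 - 2 * eps) / (2 * L).
  by apply/andP; apply: hlam; lia.
move: hy Aa l1 l2 c1 c2.
set z := x (k%:Z + 1); set xk := x k; set w := x (k%:Z - 1).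
set Bz := B z; set Bxk := B xk; set Bw := B w; set Bxs := B xs.
set lk := lam k; set c := lam (k%:Z - 1).
move=> hy Aa l1 l2 c1 c2.
have ha : lk *: a = xk - lk *: Bxk - c *: (Bxk - Bw) - z.
  by rewrite hy addrAC subrr add0r.
have F1 : 0 <= ip (z - xs) (lk *: a + lk *: Bxs).
  rewrite -scalerDr ipZr // mulr_ge0 //; first by lra.
  by have := hA z a xs (- Bxs) Aa hAs; rewrite opprK.
rewrite ha in F1.
have F2 : 0 <= lk * ip (z - xs) (Bz - Bxs).
  by rewrite mulr_ge0 //; [lra | exact: (hB z Bz xs Bxs)].
have m2 : 2 * c * L <= 1 - 2 * eps.
  by move: c2; rewrite ler_pdivlMr ?mulr_gt0 // => h; lra.
have Hl : ip (Bxk - Bw) (Bxk - Bw) <= L ^+ 2 * ip (xk - w) (xk - w).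
  have h := hL xk w; rewrite /hnorm in h.
  have := ler_pM (sqrtr_ge0 _) (sqrtr_ge0 _) h h.
  by rewrite -!expr2 sqr_sqrtr ?ip_ge0 // exprMn sqr_sqrtr ?ip_ge0.
have Y := @young _ _ _ Hh c L (1 - 2 * eps) (z - xk) _ _ (_ : 0 < c) L0 m2 (_ : 1 - 2 * eps <= 1) Hl.
have {Y} Y := Y (lt_le_trans e0 c1) (ltac:(lra)).
move: F1 F2 Y.
rewrite !(ipBl Hh, ipDl Hh, ipNl Hh, ipZl Hh, ipBr Hh, ipDr Hh, ipNr Hh, ipZr Hh).
try rewrite (ip_sym Hh xk z).
try rewrite (ip_sym Hh w z).
try rewrite (ip_sym Hh xs z).
try rewrite (ip_sym Hh Bz z).
try rewrite (ip_sym Hh Bxk z).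
try rewrite (ip_sym Hh Bw z).
try rewrite (ip_sym Hh Bxs z).
try rewrite (ip_sym Hh w xk).
try rewrite (ip_sym Hh xs xk).
try rewrite (ip_sym Hh Bz xk).
try rewrite (ip_sym Hh Bxk xk).
try rewrite (ip_sym Hh Bw xk).
try rewrite (ip_sym Hh Bxs xk).
try rewrite (ip_sym Hh xs w).
try rewrite (ip_sym Hh Bz w).
try rewrite (ip_sym Hh Bxk w).
try rewrite (ip_sym Hh Bw w).
try rewrite (ip_sym Hh Bxs w).
try rewrite (ip_sym Hh Bz xs).
try rewrite (ip_sym Hh Bxk xs).
try rewrite (ip_sym Hh Bw xs).
try rewrite (ip_sym Hh Bxs xs).
try rewrite (ip_sym Hh Bxk Bz).
try rewrite (ip_sym Hh Bw Bz).
try rewrite (ip_sym Hh Bxs Bz).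
try rewrite (ip_sym Hh Bw Bxk).
try rewrite (ip_sym Hh Bxs Bxk).
try rewrite (ip_sym Hh Bxs Bw).
move=> *.
lra.
Qed.
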